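(* Let $m,n$ be natural numbers. If the $n$-th term $G(n,m)$ of the Goodstein sequence $G(m)$ is $0$, then $n=2n_1$ for some natural number $n_1$, and $G(k,m)=n-k$ for all $k$ with $n_1\le k<n$.
   Context: For a natural number base $b>1$, the hereditary representation $m\langle b\rangle$ of $m$ is $\sum_{i=0}^{l} a_i b^{i}$ with $0\le a_i<b$, $a_l\ne0$, each exponent itself written in hereditary representation in base $b$, recursively. $m\langle b\rangle''$ is obtained by syntactically replacing every $b$ by $b+1$ in $m\langle b\rangle$. The Goodstein sequence $G(m)=\{m, m''-1, (m''-1)''-1,\dots\}$ starts from $m$ in base $2$; its $n$-th term is $G(n,m)$, with $G(1,m)=m$ in base $2$, $G(k,m)$ written in base $k+1$, and $G(k+1,m)=G(k,m)\langle k+1\rangle''-1$. *)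

(* Defs.v *)
From mathcomp Require Import all_boot.
Set Implicit Arguments. Unset Strict Implicit. Unset Printing Implicit Defensive.

(* [bump_fuel f b m]: computes m<b>'' : write m in hereditary base-b
   representation and syntactically replace every b by b+1.
   If m > 0 and e = trunc_log b m (largest e with b^e <= m), then
   m = a * b^e + r with a = m %/ b^e (0 < a < b) and r = m %% b^e < b^e;
   the leading term a*b^e becomes a*(b+1)^(e<b>''), and r is processed
   recursively (its terms have smaller exponents).  For b >= 2, fuel m.+1
   is always sufficient, since e < m and r < m. *)
Fixpoint bump_fuel (fuel b m : nat) : nat :=
  match fuel with
  | 0 => 0
  | f.+1 =>
      if m == 0 then 0
      else
        let e := trunc_log b m in
        (m %/ b ^ e) * b.+1 ^ (bump_fuel f b e) + bump_fuel f b (m %% b ^ e)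
  end.

Definition bump (b m : nat) : nat := bump_fuel m.+1 b m.

(* goodstein_aux k m = G(k+1, m) (written in base k+2). *)
Fixpoint goodstein_aux (k m : nat) : nat :=
  match k with
  | 0 => m
  | k'.+1 => bump k'.+2 (goodstein_aux k' m) - 1
  end.

(* G(n, m): n-th term of the Goodstein sequence, with G(1,m) = m and
   G(k+1,m) = G(k,m)<k+1>'' - 1.  (Index n = 0 is not used by the paper;
   we set G(0,m) = m.) *)
Definition G (n m : nat) : nat := goodstein_aux n.-1 m.

Example G3 : [seq G k 3 | k <- iota 1 6] = [:: 3; 3; 3; 2; 1; 0]. Proof. by []. Qed.
Example G4 : G 2 4 = 26. Proof. by []. Qed.

(* Main.v *)
Require Import Defs.
From mathcomp Require Import all_boot.
From mathcomp Require Import zify.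

Lemma bump_fuel0 f b : bump_fuel f b 0 = 0.
Proof. by case: f. Qed.

Lemma bump_fuelS f b x : bump_fuel f.+1 b x = if x == 0 then 0 else
  (x %/ b ^ trunc_log b x) * b.+1 ^ (bump_fuel f b (trunc_log b x)) + bump_fuel f b (x %% b ^ trunc_log b x).
Proof. by []. Qed.

Lemma bump_fuel_pos f b x : 1 < b -> 0 < f -> 0 < x -> 0 < bump_fuel f b x.
Proof.
move=> b1; case: f => // f _ x0; rewrite bump_fuelS.
have -> : (x == 0) = false by case: x x0.
have h := trunc_logP b1 x0.
have ha : 0 < x %/ b ^ trunc_log b x by rewrite divn_gt0 // expn_gt0; lia.
have hb : 0 < b.+1 ^ bump_fuel f b (trunc_log b x) by rewrite expn_gt0.
by rewrite ltn_addr // muln_gt0 ha hb.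
Qed.

Lemma bump_small b x : 1 < b -> x < b -> Defs.bump b x = x.
Proof.
move=> b1 xb; rewrite /Defs.bump. rewrite bump_fuelS.
have [->//|x0] := eqVneq x 0.
have -> : trunc_log b x = 0.
  by apply/eqP; rewrite trunc_log_eq0; apply/orP; right; lia.
by rewrite expn0 divn1 modn1 bump_fuel0 expn0 muln1 addn0.
Qed.

Lemma bump_big b x : 1 < b -> b <= x -> b.+1 <= Defs.bump b x.
Proof.
move=> b1 bx; rewrite /Defs.bump bump_fuelS.
have -> : (x == 0) = false by apply/negbTE; lia.
have x0 : 0 < x by lia.
have e0 : 0 < trunc_log b x by rewrite trunc_log_gt0 b1 /=; lia.
have h := trunc_logP b1 x0.
have ha : 0 < x %/ b ^ trunc_log b x by rewrite divn_gt0 // expn_gt0; lia.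
have hp : 0 < bump_fuel x b (trunc_log b x) by apply: bump_fuel_pos => //; lia.
apply: leq_trans (leq_addr _ _).
apply: leq_trans (leq_pmull _ ha).
by rewrite -[X in X <= _]expn1 leq_pexp2l.
Qed.

Lemma Gstep k m : 0 < k -> G k.+1 m = Defs.bump k.+1 (G k m) - 1.
Proof. by case: k. Qed.

Theorem corollary6p1 (m n : nat) :
  0 < m -> 0 < n -> G n m = 0 ->
  (forall k, 0 < k < n -> G k m != 0) ->
  exists n1 : nat, n = 2 * n1 /\ (forall k, n1 <= k < n -> G k m = n - k).
Proof.
move=> m0 n0 Gn hn.
have exP : exists k, (0 < k) && (G k m <= k) by exists n; rewrite n0 Gn.
case: (ex_minnP exP) => n1 /andP [n10 Gn1] Hmin.
have C1 : G n1 m = n1.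
  case: n1 n10 Gn1 Hmin => // [[|k]] _ Gn1 Hmin.
    by move: Gn1; rewrite /G /=; lia.
  have nk : ~~ (G k.+1 m <= k.+1).
    apply/negP => hk; have := Hmin k.+1; rewrite hk /= => /(_ isT); lia.
  have hb : k.+2 <= G k.+1 m by rewrite ltnNge.
  have := @bump_big k.+2 (G k.+1 m) isT hb.
  move: Gn1; rewrite Gstep //; lia.
have C2 : forall j, j <= n1 -> G (n1 + j) m = n1 - j.
  elim=> [|j IH] hj; first by rewrite addn0 subn0.
  rewrite addnS Gstep; last lia.
  rewrite IH; last lia.
  rewrite bump_small; lia.
have n1n : n1 <= n by apply: Hmin; rewrite n0 Gn.
have hn2 : n = 2 * n1.
  case: (ltnP n (2 * n1)) => h1.
    have := C2 (n - n1); rewrite subnKC // => /(_ ltac:(lia)); rewrite Gn; lia.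
  case: (ltnP (2 * n1) n) => h2; last lia.
  have := hn (2 * n1); rewrite h2 andbT.
  have -> : 2 * n1 = n1 + n1 by lia.
  rewrite C2 // subnn => /(_ ltac:(lia)); by [].
exists n1; split => // k /andP [k1 k2].
have := C2 (k - n1); rewrite subnKC // => /(_ ltac:(lia)) ->; lia.
Qed.
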